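(* Let $n\ge 1$, $d\ge 2$, and let $P\in\mathbb{C}[x_0,\dots,x_n]$ be a nonzero homogeneous polynomial of degree $d$. Then $$\mathrm{r}(P)\le (\mathrm{Cr}(P)-1)d+2-\mathrm{Cr}(P).$$
   Context: The rank $\mathrm{r}(P)$ of a degree $d$ form $P$ is the minimum $r$ such that $P=L_1^d+\cdots+L_r^d$ for some linear forms $L_1,\dots,L_r\in\mathbb{C}[x_0,\dots,x_n]$. Let $N=\binom{n+d}{d}-1$ and let $\nu_d:\mathbb{P}^n\to\mathbb{P}^N$ be the degree $d$ Veronese embedding, with image $X_{n,d}$; $[P]\in\mathbb{P}^N$ denotes the projective class of $P$ (so $\mathrm{r}(P)$ is the minimal number of points of $X_{n,d}$ whose linear span contains $[P]$). A zero-dimensional scheme $Z\subset\mathbb{P}^N$ is curvilinear if the Zariski tangent space at each point of its support has dimension $\le 1$ (equivalently, each connected component is of the form $\mathcal{O}_{C,Q}/\mathfrak{m}_Q^{e}$ for a smooth point $Q$ of a reduced curve $C$). The curvilinear rank is $\mathrm{Cr}(P)=\min\{\deg(Z): Z\subset X_{n,d}$ a zero-dimensional curvilinear scheme with $[P]\in\langle Z\rangle\}$, where $\langle Z\rangle$ is the linear span of $Z$. *)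

(* Defs.v *)
(* The complex numbers are modelled as R[i] = complex R for an
   arbitrary R : realType (every realType is a complete archimedean ordered
   field, i.e. a copy of the reals, so R[i] is a copy of C). *)
From mathcomp Require Import all_boot all_algebra.
From mathcomp Require Import reals.
From mathcomp.real_closed Require Import complex.
From mathcomp Require Import mpoly.
Set Implicit Arguments. Unset Strict Implicit. Unset Printing Implicit Defensive.
Import GRing.Theory Num.Theory.
Local Open Scope ring_scope.

Definition linform (C : comNzRingType) (n : nat) (v : 'rV[C]_n.+1)
  : {mpoly C[n.+1]} := \sum_(i < n.+1) v 0 i *: 'X_i.

(* Proportionality of vectors of C^{n+1} (same point of P^n when nonzero). *)
Definition proportional (C : comNzRingType) (n : nat) (v w : 'rV[C]_n.+1) : Prop :=
  exists a : C, w = a *: v.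

Definition waring_decomp (C : comNzRingType) (n d r : nat) (P : {mpoly C[n.+1]}) : Prop :=
  exists L : 'I_r -> 'rV[C]_n.+1, P = \sum_(i < r) (linform (L i)) ^+ d.

Definition is_rank (C : comNzRingType) (n d : nat) (P : {mpoly C[n.+1]}) (r : nat) : Prop :=
  waring_decomp d r P /\ forall r', waring_decomp d r' P -> (r <= r')%N.

(* A curvilinear connected component of length e supported at a point of P^n
   is (the image of) a closed embedding Spec C[t]/(t^e) -> P^n, given on the
   affine cone by a jet  gamma(t) = v_0 + v_1 t + ... + v_{e-1} t^{e-1}
   (a list [:: v_0; ...; v_{e-1}]) with v_0 <> 0 and, when e >= 2, v_1 not
   proportional to v_0 (nonzero tangent direction = closed embedding).
   Its image in X_{n,d} under nu_d is parametrized on the cone by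
   (linform gamma(t))^d, a polynomial in t with coefficients degree-d forms. *)
Definition jet_form (C : comNzRingType) (n : nat) (s : seq 'rV[C]_n.+1)
  : {poly {mpoly C[n.+1]}} :=
  \sum_(j < size s) (linform (nth 0 s j))%:P * 'X^j.

Definition curvilinear_jet (C : comNzRingType) (n : nat) (s : seq 'rV[C]_n.+1) : Prop :=
  (0 < size s)%N /\ nth 0 s 0 <> 0 /\
  ((1 < size s)%N -> ~ proportional (nth 0 s 0) (nth 0 s 1)).

(* A zero-dimensional curvilinear subscheme Z of X_{n,d} = nu_d(P^n), given as
   the list of its connected components (distinct supports). *)
Definition curvilinear_scheme (C : comNzRingType) (n : nat) (Z : seq (seq 'rV[C]_n.+1)) : Prop :=
  (forall i, (i < size Z)%N -> curvilinear_jet (nth [::] Z i)) /\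
  (forall i j, (i < size Z)%N -> (j < size Z)%N -> i <> j ->
     ~ proportional (nth 0 (nth [::] Z i) 0) (nth 0 (nth [::] Z j) 0)).

Definition scheme_degree (C : comNzRingType) (n : nat) (Z : seq (seq 'rV[C]_n.+1)) : nat :=
  sumn (map size Z).

(* [P] lies in the linear span <nu_d(Z)>: the span of a component of length e
   with jet gamma is spanned by the coefficients of t^0, ..., t^{e-1} of
   (linform gamma(t))^d, and the span of Z is the join of the spans of its
   components. *)
Definition in_span (C : comNzRingType) (n d : nat) (Z : seq (seq 'rV[C]_n.+1))
  (P : {mpoly C[n.+1]}) : Prop :=
  exists c : nat -> nat -> C,
    P = \sum_(i < size Z) \sum_(k < size (nth [::] Z i))
          c i k *: ((jet_form (nth [::] Z i)) ^+ d)`_k.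

Definition curvilinear_decomp (C : comNzRingType) (n d r : nat) (P : {mpoly C[n.+1]}) : Prop :=
  exists Z : seq (seq 'rV[C]_n.+1),
    curvilinear_scheme Z /\ scheme_degree Z = r /\ in_span d Z P.

Definition is_curvilinear_rank (C : comNzRingType) (n d : nat) (P : {mpoly C[n.+1]}) (c : nat) : Prop :=
  curvilinear_decomp d c P /\ forall c', curvilinear_decomp d c' P -> (c <= c')%N.

(* Main.v *)
Require Import Defs.
From mathcomp Require Import all_boot all_algebra all_field.
From mathcomp Require Import reals.
From mathcomp.real_closed Require Import complex.
From mathcomp Require Import mpoly.
From mathcomp Require Import zify ring lra.
Set Implicit Arguments. Unset Strict Implicit. Unset Printing Implicit Defensive.
Import GRing.Theory Num.Theory.
Local Open Scope ring_scope.

Section Scalar.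
Variable C : numClosedFieldType.

Definition Crev e (cf : nat -> C) : {poly C} := \poly_(j < e) cf (e.-1 - j)%N.

Lemma exB e (cf : nat -> C) : (0 < e)%N -> cf e.-1 != 0 ->
  exists B : {poly C}, [/\ (size B <= e)%N, B`_0 != 0 &
     forall j, (0 < j < e)%N -> (Crev e cf * B)`_j = 0].
Proof.
move=> e0 ce.
have Cr0 : (Crev e cf)`_0 = cf e.-1 by rewrite coef_poly e0 subn0.
have cop : coprimep (Crev e cf) 'X^e.
  rewrite coprimep_pexpr // coprimepX /root horner_coef0 Cr0 //.
case/Bezout_eq1_coprimepP: cop => [[u v]] /= Huv.
set B := u %% 'X^e.
have eB : u = u %/ 'X^e * 'X^e + B := divp_eq _ _.
have HB : Crev e cf * B = 1 - (v + Crev e cf * (u %/ 'X^e)) * 'X^e.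
  move: eB Huv; set w := u %/ 'X^e => eB Huv.
  rewrite -Huv eB; ring.
exists B; split.
- have := ltn_modp u 'X^e; rewrite size_polyXn -/B.
  by rewrite monic_neq0 ?monicXn // ltnS.
- apply/eqP => B0.
  have := f_equal (fun p : {poly C} => p`_0) HB; rewrite /= coefM big_ord1 subn0 B0 mulr0.
  rewrite coefB coef1 coefMXn e0 subr0 /= => /eqP; by rewrite eq_sym oner_eq0.
- move=> j /andP [j0 je]; rewrite HB coefB coef1 coefMXn je subr0.
  by case: j j0 {je}.
Qed.


Lemma avoid_seq (S : seq C) : exists s, s \notin S.
Proof.
set s1 := map (fun k : nat => k%:R : C) (iota 0 (size S).+1).
have : ~~ all (fun z => z \in S) s1.
  apply/negP => /allP H.
  have : (size s1 <= size S)%N.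
    apply: uniq_leq_size => //.
    rewrite map_inj_uniq ?iota_uniq // => a b /eqP; rewrite eqr_nat => /eqP.
    done.
  by rewrite size_map size_iota ltnn.
by case/allPn => z _ zS; exists z.
Qed.

Lemma exq m (B : {poly C}) : (0 < m)%N -> (size B <= m)%N -> B`_0 != 0 ->
  exists s : C, exists rs : seq C,
    [/\ 'X^m + s *: B = \prod_(z <- rs) ('X - z%:P), uniq rs & size rs = m].
Proof.
move=> m0 sB B0.
set T := 'X * B^`() - m%:R *: B.
have T0 : T`_0 != 0.
  rewrite /T coefB coefXM eqxx coefZ sub0r oppr_eq0 mulf_neq0 //.
  by rewrite pnatr_eq0 -lt0n.
have Tn0 : T != 0 by apply: contraNneq T0 => ->; rewrite coef0.
have [rsT HT] := closed_field_poly_normal T.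
have [s sS] := avoid_seq (0 :: map (fun r => - r ^+ m / B.[r]) rsT).
set q := 'X^m + s *: B.
have sq : size q = m.+1.
  rewrite /q size_polyDl size_polyXn // ltnS; exact: leq_trans (size_scale_leq _ _) sB.
have lq : lead_coef q = 1.
  rewrite /q lead_coefDl ?lead_coefXn // size_polyXn ltnS.
  exact: leq_trans (size_scale_leq _ _) sB.
have [rs Hrs] := closed_field_poly_normal q.
rewrite lq scale1r in Hrs.
exists s, rs; split => //; last first.
  by have := size_prod_XsubC rs id; rewrite -Hrs sq => -[].
rewrite -separable_prod_XsubC -Hrs unlock.
apply/Pdiv.ClosedField.coprimepP => r qr; apply/negP => /eqP dq.
have s0 : s != 0 by apply: contraNneq sS => ->; rewrite inE eqxx.
move: qr; rewrite /root /q hornerD hornerXn hornerZ => /eqP qr.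
move: dq; rewrite /q derivD derivXn derivZ hornerD hornerMn hornerXn hornerZ => dq.
have Tr : T.[r] = 0.
  apply/eqP; rewrite -(mulIr_eq0 _ (mulIf s0)) mulrC; apply/eqP.
  rewrite /T hornerD hornerN hornerM hornerX hornerZ.
  have em : r ^+ m = r * r ^+ m.-1 by rewrite -exprS prednK.
  have e1 : s * B^`().[r] = - (r ^+ m.-1 *+ m) by apply/eqP; rewrite -addr_eq0 addrC dq.
  have e2 : s * B.[r] = - r ^+ m by apply/eqP; rewrite -addr_eq0 addrC qr.
  rewrite mulrBr mulrA (mulrC s r) -mulrA e1 mulrCA e2 em; ring.
have rT : r \in rsT.
  rewrite -root_prod_XsubC /root.
  move: Tr; rewrite HT hornerZ => /eqP; rewrite mulf_eq0 lead_coef_eq0 (negPf Tn0) //.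
have Br : B.[r] != 0.
  apply/eqP => Br; move: qr; rewrite Br mulr0 addr0 => /eqP; rewrite expf_eq0 m0 /= => /eqP r0.
  by move: Tr T0; rewrite r0 horner_coef0 => ->; rewrite eqxx.
move: sS; rewrite inE negb_or => /andP [_ /negP]; apply.
apply/mapP; exists r => //.
apply: (mulIf Br); rewrite divfK //.
by apply/eqP; rewrite -addr_eq0 addrC qr.
Qed.

Definition lag (m : nat) (x : 'I_m -> C) (j : 'I_m) : {poly C} :=
  ((\prod_(i < m | i != j) (x j - x i))^-1)%:P * \prod_(i < m | i != j) ('X - (x i)%:P).

Lemma lag_eval m (x : 'I_m -> C) : injective x -> forall j i : 'I_m, (lag x j).[x i] = (i == j)%:R.
Proof.
move=> xinj j i; rewrite /lag hornerM hornerC horner_prod.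
have -> : \prod_(i0 < m | i0 != j) ('X - (x i0)%:P).[x i] = \prod_(i0 < m | i0 != j) (x i - x i0).
  by apply: eq_bigr => k _; rewrite hornerXsubC.
case: (eqVneq i j) => [->|nij].
  rewrite mulVf //; apply/prodf_neq0 => k kj; rewrite subr_eq0.
  by apply/negP => /eqP /xinj E; move: kj; rewrite E eqxx.
rewrite [X in _ * X](bigD1 i nij) /=.
by rewrite subrr mul0r mulr0.
Qed.

Lemma size_lag m (x : 'I_m -> C) j : (size (lag x j) <= m)%N.
Proof.
rewrite /lag; apply: (leq_trans (size_polyMleq _ _)).
rewrite size_polyC.
rewrite -[\prod_(i < m | i != j) ('X - (x i)%:P)]big_filter size_prod_XsubC.
have Hs : (size [seq i <- index_enum 'I_m | i != j] < m)%N.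
  rewrite size_filter.
  have h1 := count_predC (fun i => i != j) (index_enum 'I_m).
  have h2 : (0 < count (predC (fun i => i != j)) (index_enum 'I_m))%N.
    by rewrite -has_count; apply/hasP; exists j; rewrite ?mem_index_enum //= eqxx.
  have h3 : size (index_enum 'I_m) = m by rewrite [index_enum _]unlock -enumT size_enum_ord.
  by rewrite -[X in (_ < X)%N]h3 -h1 -[X in (X < _)%N]addn0 ltn_add2l.
move: (_ != 0) => b; apply: leq_trans Hs; by case: b.
Qed.

Lemma interp m (x : 'I_m -> C) (g : {poly C}) : injective x -> (size g <= m)%N ->
  g = \sum_(j < m) g.[x j] *: lag x j.
Proof.
move=> xinj sg; apply/eqP; rewrite -subr_eq0; apply/eqP.
set h := _ - _.
apply/eqP/negPn/negP => hn0.
have : (size (map x (enum 'I_m)) < size h)%N.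
  apply: max_poly_roots => //.
    apply/allP => z /mapP [i _ ->]; rewrite /root /h hornerD hornerN horner_sum.
    rewrite (eq_bigr (fun j => g.[x j] * (i == j)%:R)); last first.
      by move=> j _; rewrite hornerZ lag_eval.
    rewrite (bigD1 i) //= eqxx mulr1 big1 ?addr0 ?subrr //.
    by move=> j ji; rewrite eq_sym (negPf ji) mulr0.
  by rewrite map_inj_uniq ?enum_uniq.
rewrite size_map size_enum_ord ltnNge => /negP; apply.
rewrite /h; apply: (leq_trans (size_polyD _ _)); rewrite geq_max sg size_polyN.
apply: (leq_trans (size_sum _ _ _)).
apply/bigmax_leqP => j _; apply: (leq_trans (size_scale_leq _ _)); exact: size_lag.
Qed.


Lemma moments e m (cf : nat -> C) : (0 < e)%N -> (e <= m)%N -> cf e.-1 != 0 ->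
  exists x a : 'I_m -> C, forall k, (k <= m + e - 2)%N ->
    \sum_(j < m) a j * x j ^+ k = (if (k < e)%N then cf k else 0).
Proof.
move=> e0 em ce.
have [B [sB B0 HB]] := exB e0 ce.
have m0 : (0 < m)%N by apply: leq_trans e0 em.
have [s [rs [Hq urs srs]]] := exq m0 (leq_trans sB em) B0.
set q := 'X^m + s *: B in Hq.
pose phi := fun g : {poly C} => (Crev e cf * g)`_e.-1.
have phiZsum : forall n (c : 'I_n -> C) (p : 'I_n -> {poly C}),
    phi (\sum_(j < n) c j *: p j) = \sum_(j < n) c j * phi (p j).
  by move=> n c p; rewrite /phi mulr_sumr coef_sum; apply: eq_bigr => j _; rewrite -scalerAr coefZ.
pose x := fun j : 'I_m => nth 0 rs j.
have xinj : injective x.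
  move=> i j /eqP; rewrite /x nth_uniq ?srs // => /eqP; apply: val_inj.
have qx : forall j, q.[x j] = 0.
  by move=> j; rewrite Hq; apply/eqP; rewrite -/(root _ _) root_prod_XsubC mem_nth // srs.
have phiq : forall i, (i < e.-1)%N -> phi ('X^i * q) = 0.
  move=> i ie; rewrite /phi.
  have -> : Crev e cf * ('X^i * q) = (Crev e cf * q) * 'X^i by ring.
  rewrite coefMXn ltnNge (ltnW ie) /= /q mulrDr coefD coefMXn.
  have -> : (e.-1 - i < m)%N by lia.
  rewrite -scalerAr coefZ HB ?mulr0 ?addr0 //; apply/andP; split; lia.
exists x, (fun j => phi (lag x j)) => k hk.
have qn0 : q != 0 by rewrite Hq monic_neq0 // monic_prod_XsubC.
have sq : size q = m.+1 by rewrite Hq size_prod_XsubC srs.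
have eg := divp_eq ('X^k) q.
set h := 'X^k %/ q in eg; set r := 'X^k %% q in eg.
have sr : (size r <= m)%N by have := ltn_modp ('X^k) q; rewrite qn0 sq ltnS.
have sh : (size h <= e.-1)%N by rewrite /h size_divp // size_polyXn sq /=; lia.
have -> : \sum_(j < m) phi (lag x j) * x j ^+ k = phi r.
  rewrite [in RHS](interp xinj sr) phiZsum; apply: eq_bigr => j _.
  rewrite mulrC; congr (_ * _).
  by rewrite -hornerXn eg hornerD hornerM qx mulr0 add0r.
have -> : phi r = phi ('X^k) - phi (h * q).
  by rewrite /phi -coefB -mulrBr eg addrC addKr.
have -> : phi (h * q) = 0.
  rewrite -[h]coefK poly_def mulr_suml.
  rewrite (eq_bigr (fun i : 'I_(size h) => h`_i *: ('X^i * q))); last first.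
    by move=> i _; rewrite scalerAl.
  rewrite phiZsum big1 // => i _; rewrite phiq ?mulr0 //.
  exact: leq_trans (ltn_ord i) sh.
rewrite subr0 /phi coefMXn coef_poly.
case: (ltnP e.-1 k) => hke.
  by have -> : (k < e)%N = false by lia.
have -> : (k < e)%N = true by lia.
have -> : (e.-1 - k < e)%N = true by lia.
by congr cf; lia.
Qed.

End Scalar.

Section Forms.
Variable R : realType.
Variables (n d : nat).
Local Notation C := (R[i]).
Local Notation MP := {mpoly C[n.+1]}.

Lemma linform_sum N (c : 'I_N -> C) (v : 'I_N -> 'rV[C]_n.+1) :
  linform (\sum_(j < N) c j *: v j) = \sum_(j < N) c j *: linform (v j).
Proof.
rewrite /linform.
rewrite (eq_bigr (fun i => \sum_(j < N) (c j * v j 0 i) *: 'X_i)); last first.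
  by move=> i _; rewrite summxE scaler_suml; apply: eq_bigr => j _; rewrite mxE.
rewrite exchange_big /=; apply: eq_bigr => j _.
by rewrite scaler_sumr; apply: eq_bigr => i _; rewrite scalerA.
Qed.

Lemma linformZ (a : C) (v : 'rV[C]_n.+1) : linform (a *: v) = a *: linform v.
Proof.
by rewrite /linform scaler_sumr; apply: eq_bigr => i _; rewrite mxE scalerA.
Qed.

Lemma jet_formE (s : seq 'rV[C]_n.+1) :
  jet_form s = \poly_(j < size s) linform (nth 0 s j).
Proof.
by rewrite /jet_form poly_def; apply: eq_bigr => j _; rewrite mul_polyC.
Qed.

Lemma horner_jet (s : seq 'rV[C]_n.+1) (t : C) :
  (jet_form s).[t%:MP] = linform (\sum_(j < size s) t ^+ j *: nth 0 s j).
Proof.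
rewrite linform_sum /jet_form horner_sum; apply: eq_bigr => j _.
by rewrite hornerM hornerC hornerXn -rmorphXn /= mulrC mul_mpolyC.
Qed.

Lemma waring_add r1 r2 (P1 P2 : MP) :
  waring_decomp d r1 P1 -> waring_decomp d r2 P2 -> waring_decomp d (r1 + r2) (P1 + P2).
Proof.
move=> [L1 ->] [L2 ->].
exists (fun i => match split i with inl a => L1 a | inr b => L2 b end).
rewrite big_split_ord /=; congr (_ + _); apply: eq_bigr => i _.
  by rewrite (unsplitK (inl i)).
by rewrite (unsplitK (inr i)).
Qed.

Lemma waring0 : waring_decomp d 0 (0 : MP).
Proof. by exists (fun i => 0); rewrite big_ord0. Qed.

Lemma trunc_pow (A B : {poly MP}) e k : (k < e)%N ->
  ((A + B * 'X^e) ^+ d)`_k = (A ^+ d)`_k.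
Proof.
move=> ke.
suff [G ->] : exists G, (A + B * 'X^e) ^+ d = A ^+ d + G * 'X^e.
  by rewrite coefD coefMXn ke addr0.
elim: d => [|dd [G HG]]; first by exists 0; rewrite !expr0 mul0r addr0.
exists (G * A + A ^+ dd * B + G * B * 'X^e).
by rewrite !exprSr HG; ring.
Qed.


Lemma comp_dec (s : seq 'rV[C]_n.+1) (cf : nat -> C) : (2 <= d)%N -> (0 < size s)%N ->
  cf (size s).-1 != 0 ->
  waring_decomp d ((size s).-1 * d.-1 + 1)
    (\sum_(k < size s) cf k *: ((jet_form s) ^+ d)`_k).
Proof.
move=> d2 s0 ce.
set e := size s in s0 ce *; set m := (e.-1 * d.-1 + 1)%N.
have d1 : (0 < d.-1)%N by lia.
have em : (e <= m)%N.
  rewrite /m -{1}(prednK s0) -addn1 leq_add2r; exact: leq_pmulr.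
have [x [a Ha]] := moments s0 em ce.
set F := jet_form s ^+ d.
set D := (e.-1 * d)%N.
have sJ : (size (jet_form s) <= e)%N by rewrite jet_formE; apply: size_poly.
have sF : (size F <= D.+1)%N.
  apply: leq_trans (size_poly_exp_leq _ _) _; rewrite ltnS /D leq_mul2r.
  by apply/orP; right; rewrite -!subn1 leq_sub2r.
have hD : (D <= m + e - 2)%N.
  rewrite /D /m -[in X in (X <= _)%N](prednK (ltnW d2)) mulnS; lia.
exists (fun j => d.-root (a j) *: \sum_(l < e) x j ^+ l *: nth 0 s l).
rewrite (eq_bigr (fun j => a j *: F.[(x j)%:MP])); last first.
  move=> j _; rewrite linformZ exprZn rootCK; last by lia.
  by rewrite /F horner_exp horner_jet.
rewrite (eq_bigr (fun j : 'I_m => \sum_(k < D.+1) (a j * x j ^+ k) *: F`_k)); last first.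
  move=> j _; rewrite (horner_coef_wide _ sF) scaler_sumr; apply: eq_bigr => k _.
  by rewrite -rmorphXn /= mulrC mul_mpolyC scalerA.
rewrite exchange_big /=.
rewrite (eq_bigr (fun k : 'I_D.+1 => (if (k < e)%N then cf k else 0) *: F`_k)); last first.
  move=> k _; rewrite -scaler_suml Ha //; apply: leq_trans hD; exact: ltnSE (ltn_ord k).
rewrite (big_ord_widen D.+1 (fun k => cf k *: F`_k)); last first.
  have : (e.-1 <= e.-1 * d)%N by apply: leq_pmulr; lia.
  rewrite /D; lia.
rewrite big_mkcond /=; apply: eq_bigr => k _.
by case: ifP => _ //; rewrite scale0r.
Qed.

End Forms.

Section Forms2.
Variable R : realType.
Variables (n d : nat).
Local Notation C := (R[i]).
Lemma jet_rcons (s : seq 'rV[C]_n.+1) v :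
  jet_form (rcons s v) = jet_form s + (linform v)%:P * 'X^(size s).
Proof.
apply/polyP => k.
rewrite !jet_formE coefD coefMXn !coef_poly coefC size_rcons nth_rcons.
case: (ltnP k (size s)) => hk.
  by rewrite ltnS (ltnW hk) addr0.
case: (eqVneq k (size s)) => [->|hne]; first by rewrite ltnSn subnn eqxx add0r.
have -> : (k < (size s).+1)%N = false by lia.
have -> : ((k - size s)%N == 0%N) = false by lia.
by rewrite addr0.
Qed.
Lemma comp (cf : nat -> C) (s : seq 'rV[C]_n.+1) : (2 <= d)%N ->
  exists r', (r' <= (size s).-1 * d.-1 + 1)%N /\
    waring_decomp d r' (\sum_(k < size s) cf k *: ((jet_form s) ^+ d)`_k).
Proof.
move=> d2; elim/last_ind: s => [|s v IH].
  by exists 0%N; split => //; rewrite big_ord0; exact: waring0.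
case: (eqVneq (cf (size s)) 0) => hc.
  have [r' [hr hw]] := IH; exists r'; split.
    apply: leq_trans hr _; rewrite size_rcons leq_add2r leq_mul2r; apply/orP; right.
    exact: leq_pred.
  rewrite size_rcons big_ord_recr /= hc scale0r addr0.
  move: hw; congr (waring_decomp _ _ _); apply: eq_bigr => k _.
  by rewrite jet_rcons trunc_pow.
exists ((size (rcons s v)).-1 * d.-1 + 1)%N; split => //.
apply: comp_dec => //; first by rewrite size_rcons.
by rewrite size_rcons.
Qed.

Lemma list_dec (Z : seq (seq 'rV[C]_n.+1)) (c : nat -> nat -> C) : (2 <= d)%N ->
  exists r', (r' <= sumn (map (fun s => (size s).-1 * d.-1 + 1)%N Z))%N /\
   waring_decomp d r' (\sum_(i < size Z) \sum_(k < size (nth [::] Z i))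
         c i k *: ((jet_form (nth [::] Z i)) ^+ d)`_k).
Proof.
move=> d2; elim: Z c => [|s Z IH] c.
  by exists 0%N; rewrite big_ord0; split => //; exact: waring0.
rewrite /= big_ord_recl /=.
have [r1 [h1 w1]] := comp (c 0%N) s d2.
have [r2 [h2 w2]] := IH (fun i => c i.+1).
exists (r1 + r2)%N; split; first by rewrite leq_add.
exact: waring_add.
Qed.

End Forms2.

Lemma sum_bound (T : eqType) (Z : seq (seq T)) dd : (0 < dd)%N ->
  (forall s, s \in Z -> 0 < size s)%N -> Z != [::] ->
  (sumn (map (fun s => (size s).-1 * dd + 1)%N Z) <= (sumn (map size Z)).-1 * dd + 1)%N.
Proof.
move=> dd0; elim: Z => [|s Z IH] // H _ /=.
have hs : (0 < size s)%N by apply: H; rewrite inE eqxx.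
case: (eqVneq Z [::]) => [-> /=|zn]; first by rewrite !addn0.
have H' : forall s, s \in Z -> (0 < size s)%N by move=> t tz; apply: H; rewrite inE tz orbT.
have := IH H' zn.
have : (0 < sumn (map size Z))%N.
  case: Z zn H' {IH H} => [//|t Z] _ H' /=; have := H' t; rewrite inE eqxx => /(_ isT); lia.
move: (sumn (map _ Z)) (sumn (map size Z)) => a b ha hb.
have -> : (size s + b).-1 = ((size s).-1 + b.-1).+1 by lia.
rewrite mulSn mulnDl; lia.
Qed.


Unset Implicit Arguments.

Theorem theorem1 (R : realType) (n d : nat) (P : {mpoly R[i][n.+1]}) (r c : nat) :
  (1 <= n)%N -> (2 <= d)%N -> P != 0 -> P \is d.-homog ->
  is_rank d P r -> is_curvilinear_rank d P c ->
  (r%:Z <= (c%:Z - 1) * d%:Z + 2 - c%:Z)%R.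
Proof.
move=> _ d2 P0 _ [_ rmin] [[Z [[Zj _] [Zdeg [cc HP]]]] _].
have [r' [hr' w']] := list_dec Z cc d2.
rewrite -HP in w'.
have rr := rmin _ w'.
have Zn : Z != [::].
  apply/eqP => Z0; move: HP P0; rewrite Z0 /= big_ord0 => ->; by rewrite eqxx.
have Zpos : forall s, s \in Z -> (0 < size s)%N.
  move=> s sZ; have := Zj (index s Z); rewrite index_mem nth_index // => /(_ sZ).
  by case.
have d1 : (0 < d.-1)%N by lia.
have hb := sum_bound d1 Zpos Zn.
have c0 : (0 < c)%N.
  rewrite -Zdeg /scheme_degree; case: Z Zn Zpos {Zj HP w' hr' hb Zdeg} => [//|s Z] _ Zpos /=.
  have := Zpos s; rewrite inE eqxx => /(_ isT) h; by rewrite /= addn_gt0 h.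
rewrite /scheme_degree in Zdeg; rewrite Zdeg in hb.
have : (r <= c.-1 * d.-1 + 1)%N by apply: leq_trans rr (leq_trans hr' hb).
move=> h.
have [a ea] : exists a, c = a.+1 by exists c.-1; rewrite prednK.
have [b eb] : exists b, d = b.+1 by exists d.-1; rewrite prednK // ltnW.
rewrite ea eb /= in h *.
have -> : ((a.+1)%:Z - 1) * (b.+1)%:Z + 2 - (a.+1)%:Z = (a * b + 1)%:Z.
  have e1 : (a.+1)%:Z = a%:Z + 1 by rewrite -addn1 PoszD.
  have e2 : (b.+1)%:Z = b%:Z + 1 by rewrite -addn1 PoszD.
  rewrite e1 e2 PoszD PoszM; ring.
by rewrite lez_nat.
Qed.
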